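(* Let $m\ge1$ and let $A=\{a_1,\dots,a_m\}$, $B=\{b_1,\dots,b_m\}$ be sets of integers with $1\le a_1<\dots<a_m$ and $1\le b_1<\dots<b_m$. Define $\ell(A,B)$ to be the largest integer $\ell\ge0$ for which there exist indices $1\le i_1<i_2<\dots<i_\ell\le m$ with $a_1<b_{i_1},\ a_2<b_{i_2},\ \dots,\ a_\ell<b_{i_\ell}$. Let $b'$ be an integer with $b'>a_m$ and $b'>b_m$, and let $B'=\{b_2,\dots,b_m,b'\}$. If $\ell(A,B)<m$, then $\ell(A,B')=\ell(A,B)+1$. *)

(* Defs.v *)
(* Sets A, B of size m are given by their increasing
   enumerations a, b : nat -> nat, 0-indexed: a_{k+1} in the paper is a k here
   (only values at k < m matter). *)
From mathcomp Require Import all_boot.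
Set Implicit Arguments. Unset Strict Implicit. Unset Printing Implicit Defensive.

Definition admissible (m : nat) (a b : nat -> nat) (l : nat) : bool :=
  [exists t : l.-tuple 'I_m,
     sorted ltn (map val t) && [forall k : 'I_l, a k < b (tnth t k)]].

(* ell(A,B): the largest admissible l (admissible l forces l <= m). *)
Definition ell (m : nat) (a b : nat -> nat) : nat :=
  \max_(l < m.+1 | admissible m a b l) l.

(* B' = {b_2,...,b_m,b'} as an increasing enumeration. *)
Definition shiftB (m : nat) (b : nat -> nat) (b' : nat) : nat -> nat :=
  fun k => if k.+1 < m then b k.+1 else b'.

(* Main.v *)
Require Import Defs.
From mathcomp Require Import all_boot.
From mathcomp Require Import zify.

Lemma mono_le (f : nat -> nat) m :
  (forall k, k.+1 < m -> f k < f k.+1) -> forall i j, i <= j -> j < m -> f i <= f j.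
Proof.
move=> hf i j; elim: j => [|j IH] hij hj; first by have -> : i = 0 by lia.
case: (ltnP i j.+1) => h.
  have := IH (ltac:(lia)) (ltac:(lia)); have := hf j hj; lia.
by have -> : i = j.+1 by lia.
Qed.

Arguments mono_le {f m}.

Lemma path_bound m : forall (s : seq nat) x, path ltn x s -> all (fun y => y < m) (x :: s) ->
  forall k, k <= size s -> nth 0 (x :: s) k + ((size s).+1 - k) <= m.
Proof.
elim=> [|y s IH] x /=.
  move=> _ /andP [hx _] k /= hk; have -> : k = 0 by lia.
  rewrite /=; lia.
move=> /andP [hxy hp] /andP [hx hall] [|k] hk /=.
  have := IH y hp hall 0 (leq0n _); rewrite /=; lia.
have := IH y hp hall k (ltac:(lia)); lia.
Qed.

Lemma adm_iff m a b : (forall k, k.+1 < m -> b k < b k.+1) -> forall l,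
  admissible m a b l = (l <= m) && [forall k : 'I_l, a k < b (m - l + k)].
Proof.
move=> hb l; apply/idP/idP.
  case/existsP => t /andP [srt /forallP H].
  have key : forall k : 'I_l, val (tnth t k) + (l - k) <= m.
    move=> k.
    have ht : val (tnth t k) = nth 0 (map val t) k.
      rewrite (nth_map (tnth t k)) ?size_tuple //; first by rewrite -tnth_nth.
    case E: (map val t) srt ht => [|x s] srt ht.
      by have := congr1 size E; rewrite size_map size_tuple /= => hl; have := ltn_ord k; lia.
    have hs : size s = l.-1 by have := congr1 size E; rewrite size_map size_tuple /=; lia.
    have hall : all (fun y => y < m) (x :: s).
      by rewrite -E; apply/allP => y /mapP [z _ ->]; exact: ltn_ord.
    have := @path_bound m s x srt hall k (ltac:(have := ltn_ord k; lia)).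
    rewrite -ht hs; have := ltn_ord k; lia.
  have hlm : l <= m.
    case: l t H key {srt} => [|l] t H key //.
    have := key ord0; rewrite /=; lia.
  apply/andP; split=> //.
  apply/forallP => k; apply: (leq_trans (H k)).
  have := key k; have := ltn_ord k => h1 h2.
  have h3 : nat_of_ord (@tnth l (ordinal m) t k) + (l - k) <= m := h2.
  apply: (mono_le hb); lia.
case/andP => hl /forallP H; apply/existsP.
case: m hb hl H => [|m] hb hl H.
  have l0 : l = 0 by lia.
  subst l; exists [tuple]; apply/andP; split=> //; apply/forallP => -[k hk] //.
exists [tuple (inord (m.+1 - l + k) : 'I_m.+1) | k < l]; apply/andP; split.
  have -> : map val [tuple (inord (m.+1 - l + k) : 'I_m.+1) | k < l] = iota (m.+1 - l) l.
    rewrite /= -map_comp -(addn0 (m.+1 - l)) iotaDl addn0 -val_enum_ord -map_comp.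
    apply: eq_map => k /=; rewrite inordK //.
    by have := ltn_ord k; lia.
  exact: iota_ltn_sorted.
apply/forallP => k; rewrite tnth_mktuple inordK; first exact: H.
by have := ltn_ord k; lia.
Qed.

Lemma max_eq (P : pred nat) m n : n <= m -> P n -> (forall l, l <= m -> P l -> l <= n) ->
  \max_(l < m.+1 | P l) l = n.
Proof.
move=> hn hP hmax; apply/eqP; rewrite eqn_leq; apply/andP; split.
  apply/bigmax_leqP => i hi; apply: hmax => //; have := ltn_ord i; lia.
exact: (leq_bigmax_cond (@Ordinal m.+1 n (ltac:(lia))) hP).
Qed.

Lemma ell_spec m a b : (forall k, k.+1 < m -> b k < b k.+1) ->
  ell m a b <= m /\ admissible m a b (ell m a b) /\
  (forall l, l <= m -> admissible m a b l -> l <= ell m a b).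
Proof.
move=> hb; rewrite /ell.
have hA : 0 < #|[pred l : 'I_m.+1 | admissible m a b l]|.
  apply/card_gt0P; exists ord0; rewrite inE adm_iff //; apply/andP; split=> //.
  by apply/forallP => -[k hk].
have [i0 hi0 E] := @eq_bigmax_cond _ [pred l : 'I_m.+1 | admissible m a b l] val hA.
split; first by rewrite E; exact: ltn_ord i0.
split; first by rewrite E.
move=> l hl hadm.
exact: (leq_bigmax_cond (@Ordinal m.+1 l (ltac:(lia))) hadm).
Qed.

Theorem lemma5p11 (m : nat) (a b : nat -> nat) (b' : nat) :
  0 < m ->
  1 <= a 0 -> (forall k, k.+1 < m -> a k < a k.+1) ->
  1 <= b 0 -> (forall k, k.+1 < m -> b k < b k.+1) ->
  a m.-1 < b' -> b m.-1 < b' ->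
  ell m a b < m ->
  ell m a (shiftB m b b') = (ell m a b).+1.
Proof.
move=> hm _ ha _ hb hab hbb hlt.
have hb' : forall k, k.+1 < m -> shiftB m b b' k < shiftB m b b' k.+1.
  move=> k hk; rewrite /shiftB hk.
  case: ifP => h; first exact: hb.
  have -> : k.+1 = m.-1 by lia. exact: hbb.
have [he [hadm hmax]] := ell_spec m a b hb.
set e := ell m a b in he hadm hmax hlt *.
rewrite /ell; apply: max_eq => //.
  move: hadm; rewrite !adm_iff // => /andP [_ /forallP H].
  apply/andP; split=> //; apply/forallP => k.
  rewrite /shiftB.
  case: (ltnP k e) => hk.
    have := H (Ordinal hk); rewrite /=.
    have -> : (m - e.+1 + k).+1 = m - e + k by lia.
    by have -> : m - e + k < m by lia.
  have -> : ((m - e.+1 + k).+1 < m) = false by have := ltn_ord k; lia.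
  apply: leq_ltn_trans hab; apply: (mono_le ha); have := ltn_ord k; lia.
move=> [|l] hl //; rewrite adm_iff // => /andP [_ /forallP H].
suff : l <= e by [].
apply: hmax; first lia.
rewrite adm_iff //; apply/andP; split; first lia.
apply/forallP => k.
have := H (widen_ord (leqnSn l) k); rewrite /shiftB /=.
have -> : (m - l.+1 + k).+1 = m - l + k by have := ltn_ord k; lia.
by have -> : m - l + k < m by have := ltn_ord k; lia.
Qed.
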